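(* For every $1 \leq q \leq Q$, \[ (Z-Z'_q)_- \leq 8Kt\,\mathbf{1}_{R_q}, \] where $(a)_-:=\max\{-a,0\}$.
   Context: Let $d \geq 2$. Let $\omega=(\omega(x))_{x \in \mathbb{Z}^d}$ be independent random variables with a common law on $\mathbb{N}_0$, not concentrated at $0$. Independently of $\omega$, let $(S_k(x,\ell))_{k \geq 0}$, $x \in \mathbb{Z}^d$, $\ell \in \mathbb{N}$, be independent simple random walks on $\mathbb{Z}^d$ with $S_0(x,\ell)=x$. For $x,y \in \mathbb{Z}^d$ let $\tau(x,y):=\inf\{k \geq 0: S_k(x,\ell)=y \text{ for some } 1 \leq \ell \leq \omega(x)\}$ ($:=\infty$ if $\omega(x)=0$). Let $C_0\in(0,\infty)$ be a constant for which there are $0<c,c'<\infty$, $0<a<1$ with $P(T(0,x)\ge s\mid\omega(0)\ge 1)\le c\,e^{-c's^{a}}$ for all $x\in\mathbb{Z}^d$ and $s\ge C_0\|x\|_1$, where $T(x,y):=\inf\{\sum_{i=0}^{m-1}\tau(x_i,x_{i+1}): m \geq 1,\ x=x_0,\dots,x_m=y\}$. Fix $\gamma>0$ and a constant $K>d(C_0+\gamma+1)$. For $t>0$ define $\sigma_t(x,y)$ by: $\sigma_t(x,y):=4Kt$ if $\|x-y\|_\infty\le t$ and $\tau(x,y)>4Kt$; $\sigma_t(x,y):=4K\|x-y\|_\infty$ if $\|x-y\|_\infty>t$; $\sigma_t(x,y):=\tau(x,y)$ otherwise; and $T_t(x,y):=\inf\{\sum_{i=0}^{m-1}\sigma_t(x_i,x_{i+1}):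 m\ge 1,\ x=x_0,\dots,x_m=y\}$. Fix $x\in\mathbb{Z}^d\setminus\{0\}$ and $t>0$. Tile $\mathbb{Z}^d$ with copies $\Lambda_q$, $q\in\mathbb{N}$, of $(-t/2,t/2]^d$, each centered at a point of $\mathbb{Z}^d$, so that each site lies in exactly one box, and let $U_q:=((\omega(z))_{z\in\Lambda_q},(S_\cdot(z,\ell))_{z\in\Lambda_q,\ell\in\mathbb{N}})$. Number the boxes so that $Z:=T_t(0,x)$ is a function $T_t(0,x,U_1,\dots,U_Q)$ of $U_1,\dots,U_Q$ for some finite $Q$. Let $(U'_q)_{q=1}^Q$ be independent copies of $(U_q)_{q=1}^Q$ and $Z'_q:=T_t(0,x,U_1,\dots,U_{q-1},U'_q,U_{q+1},\dots,U_Q)$. Let $\pi_t(0,x)=(0=x_0,x_1,\dots,x_m=x)$ be a sequence with $T_t(0,x)=\sum_{i=0}^{m-1}\sigma_t(x_i,x_{i+1})$, chosen by a deterministic tie-breaking rule, and let $R_q$ be the event that $\pi_t(0,x)$ intersects $\Lambda_q$. *)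

(* Defs.v *)
From HB Require Import structures.
From mathcomp Require Import all_boot all_order all_algebra.
From mathcomp Require Import boolp classical_sets reals ereal.
Set Implicit Arguments. Unset Strict Implicit. Unset Printing Implicit Defensive.
Import Order.TTheory GRing.Theory Num.Theory.
Local Open Scope classical_set_scope.
Local Open Scope ring_scope.

Definition pt (d : nat) := {ffun 'I_d -> int}.
Definition origin (d : nat) : pt d := [ffun => 0%Z].

Definition ninf d (x y : pt d) : nat := (\max_(i < d) `|x i - y i|%N)%N.
Definition norm1 d (x y : pt d) : nat := (\sum_(i < d) `|x i - y i|%N)%N.

(* A realization of omega = (omega(z))_z and of the walks
   S_k(z, l), z in Z^d, l >= 1, k >= 0:  walk z l k = S_k(z,l). *)
Record config (d : nat) := Config {
  om : pt d -> nat ;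
  walk : pt d -> nat -> nat -> pt d }.

Definition valid_config d (C : config d) : Prop :=
  forall z l, walk C z l 0 = z /\ forall k, norm1 (walk C z l k.+1) (walk C z l k) = 1%N.

(* S_k(x,l) = y for some 1 <= l <= omega(x) *)
Definition hit d (C : config d) (x y : pt d) (k : nat) : bool :=
  [exists l : 'I_(om C x), walk C x l.+1 k == y].

Section Passage.
Variable R : realType.
Local Open Scope ereal_scope.
(* tau(x,y) in [0, +oo]; the infimum of the empty set is +oo *)
Definition tau d (C : config d) (x y : pt d) : \bar R :=
  ereal_inf [set (k%:R)%:E | k in [set k | hit C x y k]].
Local Close Scope ereal_scope.

Definition sigma d (C : config d) (K t : R) (x y : pt d) : R :=
  if t < (ninf x y)%:R then 4 * K * (ninf x y)%:R
  else if ((4 * K * t)%:E < tau C x y)%E then 4 * K * t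
  else fine (tau C x y).

(* cost of the sequence a = x_0, x_1, ..., x_m where p = [:: x_1; ...; x_m] *)
Definition path_cost d (C : config d) (K t : R) (a : pt d) (p : seq (pt d)) : R :=
  \sum_(e <- zip (a :: p) p) sigma C K t e.1 e.2.

Definition is_path d (a b : pt d) (p : seq (pt d)) : Prop :=
  p != [::] /\ last a p = b.

Definition Tt d (C : config d) (K t : R) (a b : pt d) : R :=
  inf [set path_cost C K t a p | p in [set p | is_path a b p]].

Definition geodesic d (C : config d) (K t : R) (a b : pt d) (p : seq (pt d)) : Prop :=
  is_path a b p /\ path_cost C K t a p = Tt C K t a b.

Definition in_box d (t : R) (c z : pt d) : Prop :=
  forall i : 'I_d, (c i)%:~R - t / 2 < (z i)%:~R <= (c i)%:~R + t / 2.

(* C' is obtained from C by resampling only the variables attached to the box *)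
Definition agree_outside d (t : R) (c : pt d) (C C' : config d) : Prop :=
  forall z, ~ in_box t c z -> om C' z = om C z /\ walk C' z = walk C z.

Definition indic (P : Prop) : R := if `[< P >] then 1 else 0.

Definition neg_part (a : R) : R := Num.max (- a) 0.
End Passage.

(* Main.v *)
Require Import Defs.
From HB Require Import structures.
From mathcomp Require Import all_boot all_order all_algebra.
From mathcomp Require Import boolp classical_sets reals ereal.
From mathcomp Require Import lra.
Import Order.TTheory GRing.Theory Num.Theory.
Set Implicit Arguments. Unset Strict Implicit.
Local Open Scope ring_scope.

Fixpoint costr (R : realType) d (C : config d) (K t : R) (L : seq (pt d)) : R :=
  match L with
  | x :: ((y :: _) as L') => sigma C K t x y + costr C K t L'
  | _ => 0
  end.

Lemma costr_path (R : realType) d (C : config d) (K t : R) a p :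
  path_cost C K t a p = costr C K t (a :: p).
Proof.
rewrite /path_cost; elim: p a => [|b p IH] a /=; first by rewrite big_nil.
by rewrite big_cons /= IH.
Qed.

Lemma costr_cat (R : realType) d (C : config d) (K t : R) A y B :
  costr C K t (A ++ y :: B) = costr C K t (rcons A y) + costr C K t (y :: B).
Proof.
case: A => [|a A] /=; first by rewrite add0r.
elim: A a => [|a' A IH] a /=; first by rewrite addr0.
by rewrite IH addrA.
Qed.

Lemma sigma_ge0 (R : realType) d (C : config d) (K t : R) a b :
  0 < K -> 0 < t -> 0 <= sigma C K t a b.
Proof.
move=> hK ht; rewrite /sigma.
case: ifP => _; first by rewrite !mulr_ge0 ?ler0n // ltW.
case: ifP => _; first by rewrite !mulr_ge0 // ltW.
apply: fine_ge0; apply/ereal_infP => y [k _ <-].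
by rewrite lee_fin ler0n.
Qed.

Lemma costr_ge0 (R : realType) d (C : config d) (K t : R) L :
  0 < K -> 0 < t -> 0 <= costr C K t L.
Proof.
move=> hK ht; elim: L => [|a L IH] //=.
case: L IH => [|b L] IH //=.
by rewrite addr_ge0 // sigma_ge0.
Qed.

Lemma sigma_agree (R : realType) d (K t : R) c (C C' : config d) a b :
  agree_outside t c C C' -> ~ in_box t c a ->
  sigma C' K t a b = sigma C K t a b.
Proof.
move=> hag ha.
have E : hit C' a b = hit C a b.
  by apply/funext => k; rewrite /hit; case: (hag a ha) => -> ->.
by rewrite /sigma /tau E.
Qed.

Lemma sigma_le_small (R : realType) d (C : config d) (K t : R) a b :
  0 < K -> 0 < t -> ~~ (t < (ninf a b)%:R) -> sigma C K t a b <= 4 * K * t.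
Proof.
move=> hK ht hn; rewrite /sigma (negbTE hn).
case: ifP => // /negbT; rewrite -leNgt.
case: (tau R C a b) => [r| |] //=.
by move=> _; rewrite !mulr_ge0 // ltW.
Qed.

Lemma sigma_le_plus (R : realType) d (K t : R) (C C' : config d) a b :
  0 < K -> 0 < t -> sigma C' K t a b <= sigma C K t a b + 4 * K * t.
Proof.
move=> hK ht.
case hn: (t < (ninf a b)%:R).
  by rewrite /sigma hn lerDl !mulr_ge0 // ltW.
apply: le_trans (sigma_le_small C' hK ht (negbT hn)) _.
by rewrite lerDr sigma_ge0.
Qed.

Lemma box_close (R : realType) d (t : R) c (a b : pt d) : 0 < t ->
  in_box t c a -> in_box t c b -> ~~ (t < (ninf a b)%:R).
Proof.
move=> ht ha hb; rewrite -leNgt /ninf.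
elim/big_ind: _ => //.
- by rewrite ltW.
- by move=> m n hm hn; case: (leqP m n) => h.
move=> i _; rewrite natr_absz intr_norm rmorphB /=.
move: (ha i) (hb i) => /andP[ha1 ha2] /andP[hb1 hb2].
rewrite ler_norml; apply/andP; split; lra.
Qed.

Lemma costr_agree (R : realType) d (K t : R) c (C C' : config d) a L :
  agree_outside t c C C' ->
  (forall z, z \in belast a L -> ~ in_box t c z) ->
  costr C' K t (a :: L) = costr C K t (a :: L).
Proof.
move=> hag; elim: L a => [|b L IH] a //= h.
rewrite (sigma_agree _ _ hag); last by apply: h; rewrite inE eqxx.
congr (_ + _); apply: IH => z hz; apply: h; by rewrite inE hz orbT.
Qed.

Lemma dec_first (T : eqType) (P : T -> Prop) (L : seq T) :
  (exists z, z \in L /\ P z) ->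
  exists A y B, L = A ++ y :: B /\ P y /\ (forall z, z \in A -> ~ P z).
Proof.
elim: L => [|m L IH]; first by case=> z [].
case: (pselect (P m)) => hm.
  by move=> _; exists [::], m, L.
case=> z []; rewrite inE => /orP[/eqP -> //|hz hPz].
have [A [y [B [-> [hy hA]]]]] := IH (ex_intro _ z (conj hz hPz)).
exists (m :: A), y, B; split => //; split => // w; rewrite inE => /orP[/eqP -> //|].
exact: hA.
Qed.

Lemma dec_last (T : eqType) (P : T -> Prop) (L : seq T) :
  (exists z, z \in L /\ P z) ->
  exists D w E, L = D ++ w :: E /\ P w /\ (forall z, z \in E -> ~ P z).
Proof.
elim: L => [|m L IH]; first by case=> z [].
move=> hex.
case: (pselect (exists z, z \in L /\ P z)) => hL.
  have [D [w [E [-> [hw hE]]]]] := IH hL.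
  by exists (m :: D), w, E.
exists [::], m, L; split => //; split.
  case: hex => z []; rewrite inE => /orP[/eqP -> //|hz hPz].
  by exfalso; apply: hL; exists z.
by move=> z hz hPz; apply: hL; exists z.
Qed.

Lemma last_mid (T : Type) (z w : T) D E : last z (D ++ w :: E) = last w E.
Proof. by rewrite last_cat. Qed.

Lemma costr_cons2 (R : realType) d (C : config d) (K t : R) a b L :
  costr C K t (a :: b :: L) = sigma C K t a b + costr C K t (b :: L).
Proof. by []. Qed.

Theorem lemma4p3 (R : realType) (d : nat) (hd : (2 <= d)%N)
  (C0 gam K t : R) (hC0 : 0 < C0) (hgam : 0 < gam)
  (hK : d%:R * (C0 + gam + 1) < K) (ht : 0 < t)
  (x : pt d) (hx : x != origin d)
  (c : pt d) (C C' : config d)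
  (hC : valid_config C) (hC' : valid_config C')
  (hagree : agree_outside t c C C')
  (p : seq (pt d)) (hgeo : geodesic C K t (origin d) x p) :
  neg_part (Tt C K t (origin d) x - Tt C' K t (origin d) x)
    <= 8 * K * t * indic R (exists z, z \in origin d :: p /\ in_box t c z).
Proof.
have hK0 : 0 < K.
  apply: lt_trans hK; apply: mulr_gt0; first by rewrite ltr0n; case: d hd {x hx c C C' hC hC' hagree p hgeo}.
  lra.
have h4 : 0 <= 4 * K * t by rewrite !mulr_ge0 // ltW.
set o := origin d.
case: hgeo => hp hcost.
have Tle : forall q, is_path o x q -> Tt C' K t o x <= path_cost C' K t o q.
  move=> q hq; rewrite /Tt.
  have := @ge_inf R [set path_cost C' K t o q | q in [set q | is_path o x q]].
  apply.
    exists 0 => y [q' _ <-]; rewrite costr_path; by apply: costr_ge0.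
  by exists q.
set ind := indic R _.
have key : exists q, is_path o x q /\
    path_cost C' K t o q <= path_cost C K t o p + 8 * K * t * ind.
  case: (pselect (exists z, z \in o :: p /\ in_box t c z)) => hex; last first.
    rewrite /ind /indic asboolF // mulr0 addr0.
    exists p; split => //.
    rewrite !costr_path (costr_agree K hagree) // => z /mem_belast hz hb.
    by apply: hex; exists z.
  rewrite /ind /indic asboolT // mulr1.
  have [A [y [B [hL [hy hA]]]]] := dec_first hex.
  have [D [w [E [hM [hw hE]]]]] := dec_last (ex_intro (fun z => z \in y :: B /\ in_box t c z) y (conj (mem_head _ _) hy)).
  have [q hq] : exists q, o :: q = A ++ y :: w :: E.
    case: A hL {hA} => [|a A] /= [-> _]; [by exists (w :: E) | by exists (A ++ y :: w :: E)].
  exists q; split.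
    split.
      apply/eqP => q0; move: hq; rewrite q0; case: A {hL hA} => [|a [|? ?]] //.
    have -> : last o q = last o (o :: q) by [].
    rewrite hq last_mid /=.
    case: hp => _ <-.
    have -> : last o p = last o (o :: p) by [].
    rewrite hL last_mid.
    have -> : last y B = last o (y :: B) by [].
    by rewrite hM last_mid.
  rewrite !costr_path hq hL !costr_cat hM costr_cat.
  have e1 : costr C' K t (rcons A y) = costr C K t (rcons A y).
    case: A {hL hq} hA => [|a A] hA //.
    rewrite rcons_cons (costr_agree K hagree) // => z.
    by rewrite belast_rcons; apply: hA.
  have e2 : sigma C' K t y w <= 4 * K * t.
    apply: sigma_le_small => //; apply: box_close => //.
  have e3 : costr C' K t (w :: E) <= costr C K t (w :: E) + 4 * K * t.
    case: E {hM hq} hE => [|e E] hE; first by rewrite /= add0r.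
    rewrite !costr_cons2 (costr_agree K hagree); last first.
      by move=> z /mem_belast; apply: hE.
    have := sigma_le_plus C C' w e hK0 ht; lra.
  have e4 : 0 <= costr C K t (rcons D w) by apply: costr_ge0.
  rewrite e1 costr_cons2.
  lra.
case: key => q [hq hle].
have := Tle q hq; rewrite -hcost => hT.
have hind : 0 <= ind by rewrite /ind /indic; case: ifP.
rewrite /neg_part ge_max; apply/andP; split.
  lra.
by rewrite !mulr_ge0 // ltW.
Qed.
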